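(* Let $(q_n)_{n\geqslant1}$, $q_n:[0,\infty)\to\mathbf R$, be a sequence of nondecreasing functions such that $(q_n(t))_{n\geqslant1}$ is bounded for every fixed $t\geqslant0$. Let $\tilde q(t)=\limsup_{n\to\infty}q_n(t)$ and $\alpha=\lim_{t\to\infty}\tilde q(t)$. Then for any $\beta<\alpha$ there exist a subsequence $(q_{n_k})_{k\geqslant1}$ and a nondecreasing function $q:[0,\infty)\to\mathbf R$ such that $q_{n_k}(t)\to q(t)$ as $k\to\infty$ for every $t\geqslant0$, and $\lim_{t\to\infty}q(t)>\beta$. *)

(* Defs.v *)
From Stdlib Require Import Reals.
From Coquelicot Require Export Coquelicot.
Open Scope R_scope.

(* A function [0,oo) -> R is modelled as f : R -> R; only values at t >= 0 matter. *)
Definition nondecr_nonneg (f : R -> R) : Prop :=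
  forall s t, 0 <= s -> s <= t -> f s <= f t.

Definition qtilde (qs : nat -> R -> R) (t : R) : Rbar :=
  LimSup_seq (fun n => qs n t).

(* Main.v *)
Require Import Defs.
From Stdlib Require Import Reals Lra Lia ZArith Classical ClassicalEpsilon Cantor.
From Coquelicot Require Import Coquelicot.
Open Scope R_scope.

Lemma my_choice {A B : Type} (P : A -> B -> Prop) :
  (forall a, exists b, P a b) -> exists f : A -> B, forall a, P a (f a).
Proof.
  intros H. exists (fun a => proj1_sig (constructive_indefinite_description _ (H a))).
  intros a. exact (proj2_sig (constructive_indefinite_description _ (H a))).
Qed.

Definition incr (phi : nat -> nat) := forall k, (phi k < phi (S k))%nat.

Lemma incr_mono phi : incr phi -> forall m n, (m < n)%nat -> (phi m < phi n)%nat.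
Proof.
  intros H m n Hmn. induction n as [|n IH]; [lia|].
  destruct (Nat.eq_dec m n) as [->|Hne]; [apply H|].
  specialize (H n). assert (m < n)%nat by lia. specialize (IH H0). lia.
Qed.

Lemma incr_ge phi : incr phi -> forall n, (n <= phi n)%nat.
Proof.
  intros H n. induction n as [|n IH]; [lia|]. specialize (H n). lia.
Qed.

Lemma extract (P : nat -> nat -> Prop) :
  (forall k N, exists n, (N <= n)%nat /\ P k n) ->
  exists phi, incr phi /\ forall k, P k (phi k).
Proof.
  intros H.
  assert (H' : forall kN : nat * nat, exists n, (snd kN <= n)%nat /\ P (fst kN) n).
  { intros [k N]; apply H. }
  destruct (my_choice _ H') as [f Hf].
  set (phi := fix g k := match k with O => f (O, O) | S k' => f (S k', S (g k')) end).
  exists phi. split.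
  - intros k. simpl. destruct (Hf (S k, S (phi k))) as [H1 _]. simpl in H1. lia.
  - intros [|k]; simpl.
    + exact (proj2 (Hf (O,O))).
    + exact (proj2 (Hf (S k, S (phi k)))).
Qed.

Lemma bw (u : nat -> R) M : (forall n, Rabs (u n) <= M) ->
  exists phi, incr phi /\ exists l : R, is_lim_seq (fun k => u (phi k)) l.
Proof.
  intros Hb.
  destruct (Bolzano_Weierstrass u (fun c => -M <= c <= M) (compact_P3 _ _)) as [l Hl].
  { intros n. specialize (Hb n). apply Rabs_le_between in Hb. exact Hb. }
  destruct (extract (fun k n => Rabs (u n - l) < / (INR k + 1))) as [phi [Hi Hp]].
  { intros k N.
    assert (Hpos : 0 < / (INR k + 1)).
    { apply Rinv_0_lt_compat. pose proof (pos_INR k); lra. }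
    destruct (Hl (disc l (mkposreal _ Hpos)) N) as [p [Hp1 Hp2]].
    { exists (mkposreal _ Hpos). intros y Hy. exact Hy. }
    exists p. split; [exact Hp1| exact Hp2]. }
  exists phi. split; [exact Hi|]. exists l.
  apply is_lim_seq_spec. intros eps.
  destruct (archimed_cor1 eps (cond_pos eps)) as [N [HN HN0]].
  exists N. intros n Hn. eapply Rlt_trans; [apply Hp|].
  eapply Rle_lt_trans; [|exact HN].
  apply Rinv_le_contravar. apply lt_0_INR; lia.
  apply le_INR in Hn. lra.
Qed.

Lemma bw' (u : nat -> R) : exists phi, incr phi /\
  ((exists M, forall n, Rabs (u n) <= M) -> exists l : R, is_lim_seq (fun k => u (phi k)) l).
Proof.
  destruct (classic (exists M, forall n, Rabs (u n) <= M)) as [[M HM]|HN].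
  - destruct (bw u M HM) as [phi [H1 H2]]. exists phi; split; auto.
  - exists (fun k => k). split. intros k; lia. intros H; contradiction.
Qed.

Lemma tail_sub (v w : nat -> R) (l : R) i :
  is_lim_seq v l -> (forall k, (i <= k)%nat -> exists j, (k <= j)%nat /\ w k = v j) ->
  is_lim_seq w l.
Proof.
  intros Hv Hw. apply is_lim_seq_spec in Hv. apply is_lim_seq_spec.
  intros eps. destruct (Hv eps) as [N HN]. exists (max N i). intros k Hk.
  destruct (Hw k ltac:(lia)) as [j [Hj ->]]. apply HN. lia.
Qed.

Lemma diag (u : nat -> nat -> R) :
  (forall i, exists M, forall n, Rabs (u i n) <= M) ->
  exists phi, incr phi /\ forall i, exists l : R, is_lim_seq (fun k => u i (phi k)) l.
Proof.
  intros Hb.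
  destruct (my_choice _ bw') as [E HE].
  set (Phi := fix Phi i := match i with
       | O => E (u O)
       | S i' => fun n => Phi i' (E (fun m => u (S i') (Phi i' m)) n) end).
  assert (Hinc : forall i, incr (Phi i)).
  { induction i as [|i IH]; simpl.
    - exact (proj1 (HE (u O))).
    - intros k. apply incr_mono; [exact IH|]. apply (proj1 (HE _)). }
  assert (Hcv : forall i, exists l : R, is_lim_seq (fun n => u i (Phi i n)) l).
  { intros [|i].
    - apply (proj2 (HE (u O))). apply Hb.
    - simpl. destruct (Hb (S i)) as [M HM].
      apply (proj2 (HE (fun m => u (S i) (Phi i m)))). exists M. intros; apply HM. }
  assert (Hsub : forall i d k, exists j, (k <= j)%nat /\ Phi (d + i)%nat k = Phi i j).
  { intros i d. induction d as [|d IH]; intros k.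
    - exists k. split; [lia| reflexivity].
    - simpl. destruct (IH (E (fun m => u (S (d + i)) (Phi (d + i)%nat m)) k)) as [j [Hj Hj']].
      exists j. split; [|exact Hj'].
      pose proof (incr_ge _ (proj1 (HE (fun m => u (S (d + i)) (Phi (d + i)%nat m)))) k). lia. }
  exists (fun k => Phi k k). split.
  - intros k. simpl. apply incr_mono; [apply Hinc|].
    pose proof (incr_ge _ (proj1 (HE (fun m => u (S k) (Phi k m)))) (S k)). lia.
  - intros i. destruct (Hcv i) as [l Hl]. exists l.
    apply (tail_sub _ _ l i Hl). intros k Hk.
    destruct (Hsub i (k - i)%nat k) as [j [Hj Hj']]. exists j. split; [exact Hj|].
    replace (k - i + i)%nat with k in Hj' by lia. rewrite Hj'. reflexivity.
Qed.

Definition renum (i : nat) : R :=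
  let (a, p) := of_nat i in let (b, c) := of_nat p in (INR a - INR c) / (INR b + 1).

Lemma r_dense s t : s < t -> exists i, s < renum i < t.
Proof.
  intros Hst.
  destruct (archimed_cor1 (t - s) ltac:(lra)) as [b [Hb Hb0]].
  set (k := up (s * (INR b + 1))).
  exists (to_nat (Z.to_nat k, to_nat (b, Z.to_nat (- k)))).
  unfold renum. rewrite !cancel_of_to.
  assert (Hk : INR (Z.to_nat k) - INR (Z.to_nat (- k)) = IZR k).
  { rewrite !INR_IZR_INZ, <- minus_IZR. apply f_equal. lia. }
  rewrite Hk.
  destruct (archimed (s * (INR b + 1))) as [H1 H2]. fold k in H1, H2.
  assert (HB : 0 < INR b + 1) by (pose proof (pos_INR b); lra).
  assert (HB' : / (INR b + 1) < t - s).
  { eapply Rlt_trans; [|exact Hb]. apply Rinv_lt_contravar.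
    apply Rmult_lt_0_compat; [apply lt_0_INR; lia | lra]. lra. }
  split.
  - apply Rmult_lt_reg_r with (INR b + 1); [lra|].
    replace (IZR k / (INR b + 1) * (INR b + 1)) with (IZR k) by (field; lra). lra.
  - replace (IZR k / (INR b + 1)) with ((IZR k - s * (INR b + 1)) * / (INR b + 1) + s)
      by (field; lra).
    assert ((IZR k - s * (INR b + 1)) * / (INR b + 1) <= / (INR b + 1)).
    { rewrite <- (Rmult_1_l (/ (INR b + 1))) at 2. apply Rmult_le_compat_r.
      left; apply Rinv_0_lt_compat; lra. lra. }
    lra.
Qed.

Lemma rbar_dense (a b : Rbar) : Rbar_lt a b -> exists i, Rbar_lt a (renum i) /\ Rbar_lt (renum i) b.
Proof.
  destruct a as [x| |], b as [y| |]; simpl; intros H; try contradiction.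
  - destruct (r_dense x y H) as [i Hi]; exists i; simpl; lra.
  - destruct (r_dense x (x+1) ltac:(lra)) as [i Hi]; exists i; simpl; lra.
  - destruct (r_dense (y-1) y ltac:(lra)) as [i Hi]; exists i; simpl; lra.
  - destruct (r_dense 0 1 ltac:(lra)) as [i Hi]; exists i; simpl; lra.
Qed.

Lemma lim_bounded_finite (u : nat -> R) M (l : Rbar) :
  (forall n, Rabs (u n) <= M) -> is_lim_seq u l -> exists x : R, l = Finite x.
Proof.
  intros Hb Hl.
  assert (H1 : Rbar_le l M).
  { apply (is_lim_seq_le u (fun _ => M)); [|exact Hl|apply is_lim_seq_const].
    intros n; specialize (Hb n); apply Rabs_le_between in Hb; lra. }
  assert (H2 : Rbar_le (-M) l).
  { apply (is_lim_seq_le (fun _ => -M) u); [|apply is_lim_seq_const|exact Hl].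
    intros n; specialize (Hb n); apply Rabs_le_between in Hb; lra. }
  destruct l as [x| |]; simpl in *; try contradiction. eauto.
Qed.

Theorem lemma2p3 (qs : nat -> R -> R) (alpha : Rbar) (beta : R) :
  (forall n, nondecr_nonneg (qs n)) ->
  (forall t, 0 <= t -> exists M, forall n, Rabs (qs n t) <= M) ->
  is_lim (fun t => real (qtilde qs t)) p_infty alpha ->
  Rbar_lt (Finite beta) alpha ->
  exists (phi : nat -> nat) (q : R -> R),
    (forall k, (phi k < phi (S k))%nat) /\
    nondecr_nonneg q /\
    (forall t, 0 <= t -> is_lim_seq (fun k => qs (phi k) t) (Finite (q t))) /\
    exists l : Rbar, is_lim q p_infty l /\ Rbar_lt (Finite beta) l.
Proof.
  intros Hmon Hbd Hlim Hlt.
  assert (H0 : exists M0, forall t, M0 < t -> beta < real (qtilde qs t)).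
  { apply is_lim_spec in Hlim. destruct alpha as [a| |]; simpl in Hlt; try contradiction.
    - destruct (Hlim (mkposreal (a - beta) ltac:(lra))) as [M HM].
      exists M. intros t Ht. specialize (HM t Ht). simpl in HM.
      apply Rabs_lt_between in HM. lra.
    - destruct (Hlim beta) as [M HM]. exists M. exact HM. }
  destruct H0 as [M0 HM0].
  set (T := Rmax M0 0 + 1).
  assert (HT0 : 0 <= T) by (unfold T; pose proof (Rmax_r M0 0); lra).
  assert (HT : beta < real (qtilde qs T)) by (apply HM0; unfold T; pose proof (Rmax_l M0 0); lra).
  destruct (Hbd T HT0) as [MT HMT].
  assert (Hb' : exists b', beta < b' /\ forall N, exists n, (N <= n)%nat /\ b' < qs n T).
  { unfold qtilde, LimSup_seq in HT. destruct (ex_LimSup_seq _) as [l Hl]. simpl in HT.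
    destruct l as [c| |]; simpl in Hl, HT.
    - exists ((c + beta) / 2). split; [lra|]. intros N.
      destruct (proj1 (Hl (mkposreal ((c - beta)/2) ltac:(lra))) N) as [n [Hn1 Hn2]].
      exists n. split; [exact Hn1|]. simpl in Hn2. lra.
    - exists (beta + 1). split; [lra|]. intros N. apply Hl.
    - destruct (Hl (- MT - 1)) as [N HN]. specialize (HN N (le_n _)).
      specialize (HMT N). apply Rabs_le_between in HMT. lra. }
  destruct Hb' as [b' [Hbb' Hb']].
  destruct (extract (fun _ n => b' < qs n T)) as [psi0 [Hpsi0 HpsiT]].
  { intros _ N. apply Hb'. }
  destruct (diag (fun i n => qs (psi0 n) (Rabs (renum i)))) as [phi1 [Hphi1 Hcv1]].
  { intros i. destruct (Hbd (Rabs (renum i)) (Rabs_pos _)) as [M HM]. exists M. intros; apply HM. }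
  set (psi1 := fun k => psi0 (phi1 k)).
  set (Ls := fun t => LimSup_seq (fun k => qs (psi1 k) t)).
  set (Li := fun t => LimInf_seq (fun k => qs (psi1 k) t)).
  assert (K1 : forall s t, 0 <= s -> s < t -> Rbar_le (Ls s) (Li t)).
  { intros s t Hs Hst. destruct (r_dense s t Hst) as [i Hi].
    assert (Hp : Rabs (renum i) = renum i) by (apply Rabs_right; lra).
    destruct (Hcv1 i) as [l Hl]. simpl in Hl.
    assert (Hex : ex_lim_seq (fun k => qs (psi1 k) (renum i))).
    { exists l. rewrite <- Hp. exact Hl. }
    apply ex_lim_LimSup_LimInf_seq in Hex.
    apply Rbar_le_trans with (LimSup_seq (fun k => qs (psi1 k) (renum i))).
    - apply LimSup_le. exists O. intros n _. apply Hmon; lra.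
    - rewrite Hex. apply LimInf_le. exists O. intros n _. apply Hmon; lra. }
  set (B := fun t => 0 <= t /\ Rbar_lt (Li t) (Ls t)).
  assert (HnB : forall t, 0 <= t -> ~ B t -> ex_lim_seq (fun k => qs (psi1 k) t)).
  { intros t Ht HB. apply ex_lim_LimSup_LimInf_seq.
    destruct (Rbar_le_lt_or_eq_dec _ _ (LimSup_LimInf_seq_le (fun k => qs (psi1 k) t))) as [H|H].
    - exfalso; apply HB; split; assumption.
    - symmetry; exact H. }
  assert (U : forall i t1 t2, B t1 -> B t2 ->
             Rbar_lt (Li t1) (renum i) -> Rbar_lt (renum i) (Ls t1) ->
             Rbar_lt (Li t2) (renum i) -> Rbar_lt (renum i) (Ls t2) -> t1 = t2).
  { intros i t1 t2 [H1 _] [H2 _] A1 A2 A3 A4.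
    destruct (Rtotal_order t1 t2) as [H|[H|H]]; [|exact H|].
    - exfalso. pose proof (K1 t1 t2 H1 H).
      apply (Rbar_lt_not_le (renum i) (Li t2) A3).
      apply Rbar_lt_le. exact (Rbar_lt_le_trans _ _ _ A2 H0).
    - exfalso. pose proof (K1 t2 t1 H2 H).
      apply (Rbar_lt_not_le (renum i) (Li t1) A1).
      apply Rbar_lt_le. exact (Rbar_lt_le_trans _ _ _ A4 H0). }
  assert (He : forall i, exists x, 0 <= x /\ forall t, B t ->
             Rbar_lt (Li t) (renum i) -> Rbar_lt (renum i) (Ls t) -> x = t).
  { intros i. destruct (classic (exists t, B t /\ Rbar_lt (Li t) (renum i) /\ Rbar_lt (renum i) (Ls t)))
      as [[t [Bt [A1 A2]]]|HN].
    - exists t. split; [apply Bt|]. intros t' Bt' A3 A4. eapply U; eassumption.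
    - exists 0. split; [lra|]. intros t Bt A1 A2. exfalso. apply HN. eauto. }
  destruct (my_choice _ He) as [e He'].
  destruct (diag (fun i n => qs (psi1 n) (e i))) as [phi2 [Hphi2 Hcv2]].
  { intros i. destruct (Hbd (e i) (proj1 (He' i))) as [M HM]. exists M. intros; apply HM. }
  set (psi := fun k => psi1 (phi2 k)).
  assert (Hconv : forall t, 0 <= t -> exists l : R, is_lim_seq (fun k => qs (psi k) t) l).
  { intros t Ht. destruct (classic (B t)) as [Bt|Bt].
    - destruct (rbar_dense _ _ (proj2 Bt)) as [i [A1 A2]].
      pose proof (proj2 (He' i) t Bt A1 A2) as Hei.
      destruct (Hcv2 i) as [l Hl]. exists l. rewrite <- Hei. exact Hl.
    - destruct (HnB t Ht Bt) as [l Hl].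
      apply (is_lim_seq_subseq _ _ phi2 (eventually_subseq _ Hphi2)) in Hl.
      destruct (Hbd t Ht) as [M HM].
      destruct (lim_bounded_finite _ M _ (fun n => HM _) Hl) as [x ->].
      exists x. exact Hl. }
  set (q := fun t => real (Lim_seq (fun k => qs (psi k) t))).
  assert (Hq : forall t, 0 <= t -> is_lim_seq (fun k => qs (psi k) t) (q t)).
  { intros t Ht. destruct (Hconv t Ht) as [l Hl]. unfold q.
    rewrite (is_lim_seq_unique _ _ Hl). exact Hl. }
  assert (Hqmon : nondecr_nonneg q).
  { intros s t Hs Hst.
    assert (H := is_lim_seq_le _ _ _ _ (fun n => Hmon (psi n) s t Hs Hst) (Hq s Hs)
                   (Hq t ltac:(lra))). exact H. }
  assert (HqT : b' <= q T).
  { assert (H := is_lim_seq_le (fun _ => b') _ _ _ (fun n => Rlt_le _ _ (HpsiT (phi1 (phi2 n))))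
                   (is_lim_seq_const b') (Hq T HT0)). exact H. }
  exists psi, q. split; [|split; [exact Hqmon|split; [exact Hq|]]].
  { intros k. unfold psi, psi1. apply incr_mono; [exact Hpsi0|].
    apply incr_mono; [exact Hphi1|]. apply Hphi2. }
  set (E := fun y => exists t, 0 <= t /\ y = q t).
  destruct (Lub_Rbar_correct E) as [Hub Hleast].
  assert (HE : forall t, 0 <= t -> Rbar_le (q t) (Lub_Rbar E)).
  { intros t Ht. apply Hub. exists t; split; [exact Ht|reflexivity]. }
  exists (Lub_Rbar E). split.
  2: { eapply Rbar_lt_le_trans; [|apply (HE T HT0)]. simpl. lra. }
  assert (Hnot : forall c : R, Rbar_lt c (Lub_Rbar E) -> exists t0, 0 <= t0 /\ c < q t0).
  { intros c Hc. destruct (classic (exists t0, 0 <= t0 /\ c < q t0)) as [H|H]; [exact H|].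
    exfalso. assert (Hc' : Rbar_le (Lub_Rbar E) c).
    { apply Hleast. intros x [t [Ht ->]]. simpl. apply Rnot_lt_le. intros Hx. apply H. eauto. }
    exact (Rbar_lt_not_le _ _ Hc Hc'). }
  apply is_lim_spec.
  destruct (Lub_Rbar E) as [L| |] eqn:HL.
  - intros eps. destruct (Hnot (L - eps)) as [t0 [Ht0 Hqt0]]. simpl; destruct eps; simpl; lra.
    exists t0. intros x Hx. pose proof (Hqmon t0 x Ht0 ltac:(lra)).
    pose proof (HE x ltac:(lra)) as Hx'. simpl in Hx'.
    apply Rabs_lt_between. destruct eps; simpl in *; lra.
  - intros M. destruct (Hnot M) as [t0 [Ht0 Hqt0]]. simpl; trivial.
    exists t0. intros x Hx. pose proof (Hqmon t0 x Ht0 ltac:(lra)). simpl. lra.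
  - exfalso. pose proof (HE 0 (Rle_refl 0)). simpl in H. exact H.
Qed.
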